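(* Let $\mathbf{P}_1,\mathbf{P}_2\subseteq\mathbb{Z}^n$ be $\mathbb{N}$-generated sets with a non-degenerate intersection. Then for all $\mathbf{p}_1\in\mathbf{P}_1$ and $\mathbf{p}_2\in\mathbf{P}_2$ there exist $\mathbf{p}_1'\in\mathbf{P}_1$ and $\mathbf{p}_2'\in\mathbf{P}_2$ such that $\mathbf{p}_1+\mathbf{p}_1'=\mathbf{p}_2+\mathbf{p}_2'$.
   Context: A set is $\mathbb{N}$-generated if it is the set $\mathbb{N}(\mathbf{G})$ of finite $\mathbb{N}$-linear combinations of some set $\mathbf{G}$. Dimension of $\mathbf{X}\subseteq\mathbb{Q}^n$: least $k$ such that $\mathbf{X}\subseteq\bigcup_{i=1}^r(\mathbf{b}_i+\mathbf{V}_i)$ for finitely many $\mathbf{b}_i\in\mathbb{Q}^n$ and vector subspaces $\mathbf{V}_i$ of dimension $\le k$. $\mathbf{X}_1,\mathbf{X}_2$ have a non-degenerate intersection if $\dim(\mathbf{X}_1\cap\mathbf{X}_2)=\dim(\mathbf{X}_1)=\dim(\mathbf{X}_2)$. *)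

(* Defs.v *)
From HB Require Import structures.
From mathcomp Require Import all_boot all_order all_algebra.
Set Implicit Arguments. Unset Strict Implicit. Unset Printing Implicit Defensive.
Import Order.TTheory GRing.Theory Num.Theory.
Local Open Scope ring_scope.

Definition Ncomb (n : nat) (G : 'rV[int]_n -> Prop) : 'rV[int]_n -> Prop :=
  fun x => exists (m : nat) (g : 'I_m -> 'rV[int]_n) (c : 'I_m -> nat),
    (forall i, G (g i)) /\ x = \sum_(i < m) (g i) *+ c i.

Definition Ngenerated (n : nat) (X : 'rV[int]_n -> Prop) : Prop :=
  exists G : 'rV[int]_n -> Prop, forall x, X x <-> Ncomb G x.

(* X is covered by finitely many affine subspaces b_i + V_i of Q^n with
   dim V_i <= k (V_i is the row space of the matrix V i). *)
Definition dim_le (n : nat) (X : 'rV[rat]_n -> Prop) (k : nat) : Prop :=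
  exists (r : nat) (b : 'I_r -> 'rV[rat]_n) (V : 'I_r -> 'M[rat]_n),
    (forall i, (\rank (V i) <= k)%N) /\
    (forall x, X x -> exists i : 'I_r, (x - b i <= V i)%MS).

Definition dimension (n : nat) (X : 'rV[rat]_n -> Prop) (d : nat) : Prop :=
  dim_le X d /\ forall k, dim_le X k -> (d <= k)%N.

Definition toQ (n : nat) (X : 'rV[int]_n -> Prop) : 'rV[rat]_n -> Prop :=
  fun y => exists x, X x /\ y = map_mx (fun z : int => z%:~R) x.

Definition setI_pred (T : Type) (A B : T -> Prop) : T -> Prop := fun x => A x /\ B x.

Definition nondeg_inter (n : nat) (X1 X2 : 'rV[int]_n -> Prop) : Prop :=
  exists d : nat, dimension (toQ (setI_pred X1 X2)) d /\
    dimension (toQ X1) d /\ dimension (toQ X2) d.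

(* Main.v *)
Require Import Defs.
From HB Require Import structures.
From mathcomp Require Import all_boot all_order all_algebra.
From Stdlib Require Import Classical.
From mathcomp Require Import zify ring.
From Stdlib Require Import Lia.
Import Order.TTheory GRing.Theory Num.Theory.
Local Open Scope ring_scope.

Definition monoid {n : nat} (M : 'rV[int]_n -> Prop) :=
  M 0 /\ forall x y, M x -> M y -> M (x + y).

Lemma Ncomb_monoid {n} (G : 'rV[int]_n -> Prop) : monoid (Ncomb G).
Proof.
split.
  exists 0%N, (fun _ => 0), (fun _ => 0%N); split; first by case.
  by rewrite big_ord0.
move=> x y [m1 [g1 [c1 [H1 ->]]]] [m2 [g2 [c2 [H2 ->]]]].
exists (m1 + m2)%N, (fun i => match split i with inl a => g1 a | inr b => g2 b end),
  (fun i => match split i with inl a => c1 a | inr b => c2 b end); split.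
  by move=> i; case: (split i).
rewrite big_split_ord /=; congr (_ + _); apply: eq_bigr => i _.
  by have /= -> := @unsplitK m1 m2 (inl i).
by have /= -> := @unsplitK m1 m2 (inr i).
Qed.

Lemma Ngen_monoid {n} (P : 'rV[int]_n -> Prop) : Ngenerated P -> monoid P.
Proof.
move=> [G HG]; have [H0 HD] := Ncomb_monoid G.
split; first by apply/HG.
by move=> x y /HG Hx /HG Hy; apply/HG; apply: HD.
Qed.

Lemma monoid_sum {n} (M : 'rV[int]_n -> Prop) (I : finType) (F : I -> 'rV[int]_n) :
  monoid M -> (forall i, M (F i)) -> M (\sum_i F i).
Proof. by move=> [H0 HD] HF; apply: (big_ind M) => //; move=> x y; apply: HD. Qed.

Lemma monoid_mulrn {n} (M : 'rV[int]_n -> Prop) x k :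
  monoid M -> M x -> M (x *+ k).
Proof.
move=> [H0 HD] Hx; elim: k => [|k IH]; first by rewrite mulr0n.
by rewrite mulrS; apply: HD.
Qed.

Lemma monoid_I {n} (M1 M2 : 'rV[int]_n -> Prop) :
  monoid M1 -> monoid M2 -> monoid (setI_pred M1 M2).
Proof.
move=> [A0 AD] [B0 BD]; split; first by split.
by move=> x y [? ?] [? ?]; split; [apply: AD|apply: BD].
Qed.

Definition qm {m n} (A : 'M[int]_(m,n)) : 'M[rat]_(m,n) :=
  map_mx (fun z : int => z%:~R) A.

Lemma HL {n e} (M : 'rV[int]_n -> Prop) (A : 'M[int]_(e,n)) d :
  monoid M -> (forall a, M (row a A)) -> (d < \rank (qm A))%N ->
  ~ dim_le (toQ M) d.
Proof.
move=> HM HA Hr [r [b [V [HV Hcov]]]].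
set mA := qm A.
have Hnot : forall i, exists aj : 'I_e * 'I_n,
    (mA *m cokermx (V i)) aj.1 aj.2 != 0.
  move=> i; apply: NNPP => Hn.
  have : (mA <= V i)%MS.
    rewrite submxE; apply/eqP/matrixP => a j; rewrite [in RHS]mxE.
    apply/eqP; apply: NNPP => Hz; apply: Hn; exists (a, j) => /=.
    by apply/negP.
  move/mxrankS; have := HV i; move: Hr; rewrite -/mA.
  move=> h1 h2 h3; have := leq_trans h3 h2.
  by rewrite leqNgt (leq_trans h1) //.
pose aj i := xchoose (Hnot i).
pose K i := cokermx (V i).
pose c i (a : 'I_e) := (mA *m K i) a (aj i).2.
pose beta i := (b i *m K i) 0 (aj i).2.
pose Q i : {poly rat} := \sum_(a < e) c i a *: 'X^(a.+1) - (beta i)%:P.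
have HQ i : Q i != 0.
  have Ha : c i (aj i).1 != 0 := xchooseP (Hnot i).
  apply/eqP => /(congr1 (fun p : {poly rat} => p`_((aj i).1).+1)).
  rewrite coefB coefC /= subr0 coef0 coef_sum.
  rewrite (bigD1 (aj i).1) //= coefZ coefXn eqxx mulr1 big1 ?addr0.
    by move/eqP: Ha.
  move=> a' Ha'; rewrite coefZ coefXn eqSS.
  by rewrite val_eqE eq_sym (negbTE Ha') mulr0.
pose P := \prod_(i < r) Q i.
have HP : P != 0 by apply/prodf_neq0 => i _; apply: HQ.
have Hroot : forall t : nat, root P t%:R.
  move=> t.
  pose x := \sum_(a < e) row a A *+ (t ^ a.+1).
  have Mx : M x.
    by apply: monoid_sum => // a; apply: monoid_mulrn.
  have [i Hi] := Hcov (qm x) (ex_intro _ x (conj Mx erefl)).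
  pose w : 'rV[rat]_e := \row_a (t ^ a.+1)%:R.
  have Hx : qm x = w *m mA.
    apply/matrixP => z l; rewrite !mxE summxE rmorph_sum /=.
    apply: eq_bigr => a _; rewrite !mxE mulmxnE mxE.
    by rewrite rmorphMn mulr_natl.
  rewrite /root horner_prod; apply/prodf_eq0; exists i => //.
  move: Hi; rewrite submxE mulmxBl subr_eq0 => /eqP Heq.
  have := congr1 (fun X : 'M_(1,n) => X 0 (aj i).2) Heq.
  rewrite Hx -mulmxA /= => Hs; move: Hs; rewrite [in X in X = _]mxE => Hs.
  rewrite /Q hornerD hornerN hornerC horner_sum subr_eq0; apply/eqP.
  rewrite /beta -Hs; apply: eq_bigr => a _.
  by rewrite hornerZ hornerXn mxE /c mulrC natrX.
pose rs := [seq (t%:R : rat) | t <- iota 0 (size P)].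
have Hall : all (root P) rs by apply/allP => z /mapP [t _ ->].
have Hu : uniq rs.
  rewrite map_inj_uniq ?iota_uniq //.
  by move=> x y /eqP; rewrite eqr_nat => /eqP.
by have := max_poly_roots HP Hall Hu; rewrite size_map size_iota ltnn.
Qed.

Lemma rows_col_mx {n k} (S : 'rV[int]_n -> Prop) (B : 'M[int]_(k,n)) x :
  (forall a, S (row a B)) -> S x -> forall a, S (row a (col_mx B x)).
Proof.
move=> HB Hx a; rewrite -(splitK a); case: (split a) => a' /=.
  by rewrite rowKu.
rewrite rowKd; suff -> : row a' x = x by [].
by apply/rowP => l; rewrite mxE (ord1 a').
Qed.

Lemma qm_col_mx {n k l} (B : 'M[int]_(k,n)) (x : 'M[int]_(l,n)) :
  qm (col_mx B x) = col_mx (qm B) (qm x).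
Proof. by rewrite /qm map_col_mx. Qed.

Lemma rank_col_lt {n k} {B : 'M[rat]_(k,n)} {x : 'rV[rat]_n} :
  ~ (x <= B)%MS -> (\rank B < \rank (col_mx B x))%N.
Proof.
move=> Hx.
have H : (B <= col_mx B x)%MS by rewrite -addsmxE addsmxSl.
rewrite (ltn_leqif (mxrank_leqif_sup H)) col_mx_sub submx_refl /=.
by apply/negP.
Qed.

Lemma span_exists {n} (S : 'rV[int]_n -> Prop) :
  exists k (B : 'M[int]_(k,n)),
    (forall a, S (row a B)) /\ (forall x, S x -> (qm x <= qm B)%MS).
Proof.
suff aux : forall j k (B : 'M[int]_(k,n)), (forall a, S (row a B)) ->
    (n - \rank (qm B) <= j)%N -> exists k (B : 'M[int]_(k,n)),
    (forall a, S (row a B)) /\ (forall x, S x -> (qm x <= qm B)%MS).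
  apply: (aux n 0%N (0 : 'M_(0,n))); first by case.
  by rewrite leq_subr.
elim=> [|j IH] k B HB Hj.
  exists k, B; split => // x Sx; apply: NNPP => Hn.
  have := rank_col_lt Hn; have := rank_leq_col (col_mx (qm B) (qm x)).
  move: Hj; rewrite leqn0 subn_eq0 => h1 h2 h3.
  by have := leq_ltn_trans h1 (leq_trans h3 h2); rewrite ltnn.
case: (classic (forall x, S x -> (qm x <= qm B)%MS)) => Hall.
  by exists k, B.
have [x Hx] := not_all_ex_not _ _ Hall.
have [Sx Nx] : S x /\ ~ (qm x <= qm B)%MS.
  by split; [apply: NNPP => H; apply: Hx|move=> H; apply: Hx].
apply: (IH _ (col_mx B x)); first exact: rows_col_mx.
have := rank_col_lt Nx; have := rank_leq_col (col_mx (qm B) (qm x)).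
rewrite qm_col_mx; move: Hj.
set r1 := \rank (qm B); set r2 := \rank (col_mx _ _) => h1 h2 h3.
lia.
Qed.

Lemma key {n} (M I : 'rV[int]_n -> Prop) d :
  monoid M -> monoid I -> (forall x, I x -> M x) ->
  (forall k, dim_le (toQ I) k -> (d <= k)%N) -> dim_le (toQ M) d ->
  forall p, M p -> exists (D : nat) t s,
    (0 < D)%N /\ I t /\ I s /\ p *+ D + t = s.
Proof.
move=> HM HI HIM Hlow Hdim p Mp.
have [k [B [HB HBs]]] := span_exists I.
have Hd : (d <= \rank (qm B))%N.
  apply: Hlow; exists 1%N, (fun _ => 0), (fun _ => <<qm B>>%MS); split.
    by move=> _; rewrite mxrank_gen.
  move=> y [x [Ix ->]]; exists ord0; rewrite subr0 genmxE; exact: HBs.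
case: (classic (qm p <= qm B)%MS) => Hp; last first.
  exfalso; apply: (@HL _ _ M (col_mx B p) d HM _ _ Hdim).
    by apply: rows_col_mx => // a; apply: HIM.
  rewrite qm_col_mx; exact: (leq_ltn_trans Hd (rank_col_lt Hp)).
have [c Hc] := submxP Hp.
pose den (a : 'I_k) := absz (denq (c 0 a)).
have Hden a : (den a)%:R = (denq (c 0 a))%:~R :> rat.
  by rewrite natr_absz ger0_norm // ltW // denq_gt0.
pose Dn := (\prod_(a < k) den a)%N.
pose z a : int := numq (c 0 a) * (\prod_(a' | a' != a) den a')%N%:Z.
have Hz a : (Dn%:R : rat) * c 0 a = (z a)%:~R.
  rewrite /Dn (bigD1 a) //= natrM Hden /z rmorphM /= numqE.
  have -> : (((\prod_(a' | a' != a) den a')%N)%:Z%:~R : rat)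
      = (\prod_(a' | a' != a) den a')%N%:R by [].
  by rewrite mulrC mulrA.
pose pos a := if (0 <= z a) then `|z a|%N else 0%N.
pose neg a := if (0 <= z a) then 0%N else `|z a|%N.
have Hpn a : (z a)%:~R = (pos a)%:R - (neg a)%:R :> rat.
  rewrite /pos /neg; case: ifP => h; rewrite ?subr0 ?sub0r natr_absz.
    by rewrite ger0_norm.
  by rewrite ltr0_norm ?rmorphN ?opprK // ltNge h.
exists Dn, (\sum_a row a B *+ neg a), (\sum_a row a B *+ pos a).
split.
  apply: prodn_gt0 => a; by rewrite absz_gt0 denq_neq0.
split.
  by apply: monoid_sum => // a; apply: monoid_mulrn.
split.
  by apply: monoid_sum => // a; apply: monoid_mulrn.
apply/matrixP => i l; apply: (@intr_inj rat).
have Hpl : ((p i l)%:~R : rat) = \sum_a c 0 a * (B a l)%:~R.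
  have := congr1 (fun X : 'M_(1,n) => X i l) Hc.
  rewrite /= mxE (ord1 i) => ->; rewrite mxE.
  by apply: eq_bigr => a _; rewrite mxE.
rewrite mxE mulmxnE !summxE rmorphD /= rmorphMn !rmorph_sum /=.
rewrite Hpl -mulr_natl mulr_sumr -big_split /=; apply: eq_bigr => a _.
rewrite !mulmxnE !mxE.
rewrite !rmorphMn /= mulrA Hz Hpn.
by rewrite mulrBl !mulr_natl subrK.
Qed.

Theorem mainTheorem19 (n : nat) (P1 P2 : 'rV[int]_n -> Prop) :
  Ngenerated P1 -> Ngenerated P2 -> nondeg_inter P1 P2 ->
  forall p1 p2 : 'rV[int]_n, P1 p1 -> P2 p2 ->
  exists p1' p2' : 'rV[int]_n, P1 p1' /\ P2 p2' /\ p1 + p1' = p2 + p2'.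
Proof.
move=> H1 H2 [d [HdI [HdP1 HdP2]]] p1 p2 Hp1 Hp2.
have M1 := Ngen_monoid P1 H1; have M2 := Ngen_monoid P2 H2.
have MI := @monoid_I _ P1 P2 M1 M2.
have [D1 [t1 [s1 [HD1 [It1 [Is1 E1]]]]]] :=
  @key _ P1 (setI_pred P1 P2) d M1 MI (fun x h => proj1 h) (proj2 HdI) (proj1 HdP1) p1 Hp1.
have [D2 [t2 [s2 [HD2 [It2 [Is2 E2]]]]]] :=
  @key _ P2 (setI_pred P1 P2) d M2 MI (fun x h => proj2 h) (proj2 HdI) (proj1 HdP2) p2 Hp2.
case: D1 HD1 E1 => // D1 _ E1; case: D2 HD2 E2 => // D2 _ E2.
exists (p1 *+ D1 + t1 + s2), (s1 + p2 *+ D2 + t2).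
have A1 := proj2 M1; have A2 := proj2 M2.
split.
  apply: (A1); last exact: (proj1 Is2).
  by apply: (A1); [exact: (@monoid_mulrn _ P1 p1 D1 M1 Hp1)|exact: (proj1 It1)].
split.
  apply: (A2); last exact: (proj2 It2).
  by apply: (A2); [exact: (proj2 Is1)|exact: (@monoid_mulrn _ P2 p2 D2 M2 Hp2)].
rewrite -E1 -E2 !mulrS !addrA; congr (_ + _); congr (_ + _).
by rewrite addrC !addrA.
Qed.
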